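(* Let the setting, Assumption A and Assumption B below hold, with agents and data sampled without replacement, and let $w_i$ be generated by the ISFedAvg algorithm below. Define the incremental noise $$q_i=\frac1L\sum_{\ell\in\mathcal{L}_i}\frac{1}{Kp_\ell E_\ell B_\ell}\sum_{e=1}^{E_\ell}\sum_{b\in\mathcal{B}_{\ell,e}}\frac{1}{N_\ell p_b^{(\ell)}}\Big(\nabla_w Q_\ell(w_{\ell,e-1};x_{\ell,b})-\nabla_w Q_\ell(w_{i-1};x_{\ell,b})\Big).$$ Then $$\mathbb{E}\|q_i\|^2\le O(\mu)\,\mathbb{E}\|\widetilde w_{i-1}\|^2+O(\mu)\,\xi^2+O(\mu^2)\frac1K\sum_{k=1}^K\sigma_{q,k}^2,$$ where $\widetilde w_{i-1}=w^o-w_{i-1}$, $\sigma_{q,k}^2=\frac{3}{B_kN_k^2}\sum_{n=1}^{N_k}\frac{1}{p_n^{(k)}}\|\nabla_wQ_k(w_k^o;x_{k,n})\|^2$, and the constants implicit in the $O(\cdot)$ terms depend on the epoch sizes, local convergence rates, numbers of data samples, number of agents, Lipschitz constant, and the data and agent normalized inclusion probabilities. In particular $\mathbb{E}\|q_i\|^2=O(\mu)$.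
   Context: There are $K$ agents; agent $k$ holds data points $x_{k,1},\dots,x_{k,N_k}$, a loss $Q_k(w;x)$ differentiable in $w\in\mathbb{R}^M$, and the empirical risk $P_k(w)=\frac1{N_k}\sum_{n=1}^{N_k}Q_k(w;x_{k,n})$. Let $w^o=\arg\min_w\frac1K\sum_kP_k(w)$ and $w_k^o=\arg\min_wP_k(w)$. Assumption A: each $P_k$ is $\nu$-strongly convex ($\nu>0$), each $Q_k(\cdot;x_{k,n})$ is convex with $\delta$-Lipschitz gradient. Assumption B: $\|w_k^o-w^o\|\le\xi$ for all $k$. ISFedAvg with step-size $\mu>0$: at iteration $i$, select $L$ agents $\mathcal{L}_i$ from $\{1,\dots,K\}$ without replacement with $\mathbb{P}(k\in\mathcal{L}_i)=Lp_k$ ($p_k>0$, $\sum_kp_k=1$); each $k\in\mathcal{L}_i$ sets $w_{k,0}=w_{i-1}$ and for $e=1,\dots,E_k$ draws a mini-batch $\mathcal{B}_{k,e}$ of $B_k$ indices from $\{1,\dots,N_k\}$ without replacement with $\mathbb{P}(n\in\mathcal{B}_{k,e})=B_kp_n^{(k)}$ ($p_n^{(k)}>0$, $\sum_np_n^{(k)}=1$), independently of the past, and updates $w_{k,e}=w_{k,e-1}-\frac{\mu}{Kp_kE_kB_k}\sum_{b\in\mathcal{B}_{k,e}}\frac{1}{N_kp_b^{(k)}}\nabla_wQ_k(w_{k,e-1};x_{k,b})$; then $w_i=\frac1L\sum_{k\in\mathcal{L}_i}w_{k,E_k}$. The notation $O(\mu^a)$ denotes a term bounded by $C\mu^a$ for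 a constant $C$ independent of $\mu$ and $i$, for sufficiently small $\mu$. *)

(* Defs.v *)
From HB Require Import structures.
From mathcomp Require Import all_boot all_order all_algebra.
From mathcomp Require Import all_classical all_reals all_analysis.
Set Implicit Arguments. Unset Strict Implicit. Unset Printing Implicit Defensive.
Import Order.TTheory GRing.Theory Num.Theory.
Import numFieldNormedType.Exports.
Local Open Scope ring_scope.

Section ISFedAvg.
Variable (R : realType) (M : nat).
Notation vec := 'rV[R]_M.

Definition dotv (u v : vec) : R := \sum_(j < M) u 0 j * v 0 j.
Definition sqnorm (v : vec) : R := dotv v v.
Definition enorm (v : vec) : R := Num.sqrt (sqnorm v).

Definition grad (f : vec -> R) (w : vec) : vec :=
  \row_(j < M) derive f w (delta_mx 0 j : vec).

Definition convex_fun (f : vec -> R) : Prop :=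
  forall (x y : vec) (t : R), 0 <= t <= 1 ->
    f (t *: x + (1 - t) *: y) <= t * f x + (1 - t) * f y.

Definition strongly_convex (nu : R) (f : vec -> R) : Prop :=
  forall (x y : vec) (t : R), 0 <= t <= 1 ->
    f (t *: x + (1 - t) *: y)
      <= t * f x + (1 - t) * f y - nu / 2 * t * (1 - t) * sqnorm (x - y).

(* K agents; agent k has N k data points; the loss at data point n of agent k
   is Q k n : vec -> R, i.e. Q_k(. ; x_{k,n}). *)

Definition emp_risk (K : nat) (N : 'I_K -> nat)
  (Q : forall k : 'I_K, 'I_(N k) -> vec -> R) (k : 'I_K) (w : vec) : R :=
  (N k)%:R^-1 * \sum_(n < N k) Q k n w.

Definition agg_risk (K : nat) (N : 'I_K -> nat)
  (Q : forall k : 'I_K, 'I_(N k) -> vec -> R) (w : vec) : R :=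
  K%:R^-1 * \sum_(k < K) emp_risk Q k w.

(* a sampling design without replacement: a probability distribution on the
   subsets of 'I_n, supported on subsets of size m, with first order
   inclusion probabilities P(j \in S) = m * p j *)
Definition sampling_design (n m : nat) (p : 'I_n -> R) (pi : {set 'I_n} -> R)
  : Prop :=
  [/\ forall S, 0 <= pi S,
      \sum_(S : {set 'I_n}) pi S = 1,
      forall S, pi S != 0 -> #|S| = m &
      forall j : 'I_n, \sum_(S : {set 'I_n} | j \in S) pi S = m%:R * p j].

(* batch used at local step e+1 (e : nat, 0 <= e < Ek) *)
Definition batch_at (Ek Nk : nat) (bs : {ffun 'I_Ek -> {set 'I_Nk}}) (e : nat)
  : {set 'I_Nk} :=
  oapp bs finset.set0 (insub e).

Definition local_iter (K : nat) (N E B : 'I_K -> nat)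
  (Q : forall k : 'I_K, 'I_(N k) -> vec -> R)
  (p : 'I_K -> R) (pd : forall k : 'I_K, 'I_(N k) -> R) (mu : R)
  (k : 'I_K) (w : vec) (bs : {ffun 'I_(E k) -> {set 'I_(N k)}}) : nat -> vec :=
  fix it (e : nat) : vec :=
  match e with
  | 0 => w
  | e'.+1 =>
      let we := it e' in
      we - (mu / (K%:R * p k * (E k)%:R * (B k)%:R)) *:
             \sum_(b in batch_at bs e') ((N k)%:R * pd k b)^-1 *: grad (Q k b) we
  end.

(* the incremental noise q_i, for current iterate w_{i-1} = w, selected agent
   set S = L_i, and batches bb k e = B_{k,e+1} *)
Definition incr_noise (K L : nat) (N E B : 'I_K -> nat)
  (Q : forall k : 'I_K, 'I_(N k) -> vec -> R)
  (p : 'I_K -> R) (pd : forall k : 'I_K, 'I_(N k) -> R) (mu : R)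
  (w : vec) (S : {set 'I_K})
  (bb : {dffun forall k : 'I_K, {ffun 'I_(E k) -> {set 'I_(N k)}}}) : vec :=
  L%:R^-1 *: \sum_(l in S)
    (K%:R * p l * (E l)%:R * (B l)%:R)^-1 *:
      \sum_(e < E l) \sum_(b in bb l e)
        ((N l)%:R * pd l b)^-1 *:
          (grad (Q l b) (local_iter B Q p pd mu w (bb l) e) - grad (Q l b) w).

(* expectation over the sampling of iteration i (agent selection with design
   piA, batches drawn independently with designs piB k), given w_{i-1} = w *)
Definition iter_expect (K : nat) (N E : 'I_K -> nat)
  (piA : {set 'I_K} -> R) (piB : forall k : 'I_K, {set 'I_(N k)} -> R)
  (F : {set 'I_K} ->
       {dffun forall k : 'I_K, {ffun 'I_(E k) -> {set 'I_(N k)}}} -> R) : R :=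
  \sum_(S : {set 'I_K})
    \sum_(bb : {dffun forall k : 'I_K, {ffun 'I_(E k) -> {set 'I_(N k)}}})
      piA S * (\prod_(k < K) \prod_(e < E k) piB k (bb k e)) * F S bb.

Definition sigma_q2 (K : nat) (N B : 'I_K -> nat)
  (Q : forall k : 'I_K, 'I_(N k) -> vec -> R)
  (pd : forall k : 'I_K, 'I_(N k) -> R) (wko : 'I_K -> vec) (k : 'I_K) : R :=
  3 / ((B k)%:R * (N k)%:R ^+ 2) *
    \sum_(n < N k) (pd k n)^-1 * sqnorm (grad (Q k n) (wko k)).

End ISFedAvg.

(* Main.v *)
Require Import Defs.
From HB Require Import structures.
From mathcomp Require Import all_boot all_order all_algebra.
From mathcomp Require Import all_classical all_reals all_analysis.
From mathcomp Require Import ring lra.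
Import Order.TTheory GRing.Theory Num.Theory.
Import numFieldNormedType.Exports.
Set Implicit Arguments. Unset Strict Implicit. Unset Printing Implicit Defensive.
Local Open Scope ring_scope.

Lemma sum_dffun_prod (R : comNzRingType) (I : finType) (T_ : I -> finType)
  (f : forall i, T_ i -> R) :
  \sum_(g : {dffun forall i : I, T_ i}) \prod_(i : I) f i (g i) =
  \prod_(i : I) \sum_(t : T_ i) f i t.
Proof.
rewrite (reindex (@dffun_of_fprod I T_)); last first.
  exact/onW_bij/dffun_of_fprod_bij.
transitivity (\sum_(t : fprod T_) \prod_(i in I) [ffun x => f i x] (t i)).
  by apply: eq_bigr => t _; apply: eq_bigr => i _; rewrite !ffunE.
rewrite (@big_fprod R 0 1 *%R +%R I T_ (fun i => [ffun x => f i x])).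
transitivity (\prod_i \sum_(j | tagged_with T_ i j) untag 0 [ffun x => f i x] j).
  by rewrite bigA_distr_big_dep.
apply: eq_bigr => i _.
rewrite (@big_tag R 0 +%R I T_ f i).
apply: eq_bigr => j _; rewrite /untag; case: j => /= k t; case: eqP => // e; by rewrite ffunE.
Qed.
Section Vec.
Variables (R : realType) (M : nat).
Notation vec := 'rV[R]_M.
Implicit Types u v w : vec.

Lemma dotvC u v : dotv u v = dotv v u.
Proof. by apply: eq_bigr => j _; rewrite mulrC. Qed.

Lemma dotvDl u v w : dotv (u + v) w = dotv u w + dotv v w.
Proof. by rewrite /dotv -big_split; apply: eq_bigr => j _; rewrite mxE mulrDl. Qed.

Lemma dotvZl (a : R) u v : dotv (a *: u) v = a * dotv u v.
Proof. by rewrite /dotv mulr_sumr; apply: eq_bigr => j _; rewrite mxE mulrA. Qed.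

Lemma dotvNl u v : dotv (- u) v = - dotv u v.
Proof. by rewrite -scaleN1r dotvZl mulN1r. Qed.

Lemma sqnorm_ge0 u : 0 <= sqnorm u.
Proof. by apply: sumr_ge0 => j _; rewrite -expr2 sqr_ge0. Qed.

Lemma sqnormD u v : sqnorm (u + v) = sqnorm u + 2 * dotv u v + sqnorm v.
Proof.
have dr : forall a b c : vec, dotv a (b + c) = dotv a b + dotv a c.
  by move=> a b c; rewrite dotvC dotvDl !(dotvC a).
rewrite /sqnorm dotvDl !dr (dotvC v u).
by rewrite mulr2n mulrDl mul1r; rewrite !addrA.
Qed.

Lemma sqnormZ (a : R) u : sqnorm (a *: u) = a ^+ 2 * sqnorm u.
Proof. by rewrite /sqnorm dotvZl dotvC dotvZl mulrA expr2. Qed.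

Lemma sqnorm0_dot u v : sqnorm u = 0 -> dotv u v = 0.
Proof.
move=> h; have hj : forall j, u 0 j = 0.
  move=> j; have /psumr_eq0P h' := h.
  have := h' (fun i _ => sqr_ge0 (u 0 i)) j isT.
  by rewrite -expr2 => /eqP; rewrite sqrf_eq0 => /eqP.
by apply: big1 => j _; rewrite hj mul0r.
Qed.

Lemma enorm_ge0 u : 0 <= enorm u.
Proof. exact: sqrtr_ge0. Qed.

Lemma enorm_sq u : enorm u ^+ 2 = sqnorm u.
Proof. by rewrite sqr_sqrtr // sqnorm_ge0. Qed.

Lemma dotv_CS u v : dotv u v <= enorm u * enorm v.
Proof.
have [a0|apos] := eqVneq (enorm u) 0.
  by rewrite sqnorm0_dot ?a0 ?mul0r // -enorm_sq a0 expr0n.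
have [b0|bpos] := eqVneq (enorm v) 0.
  by rewrite dotvC sqnorm0_dot ?b0 ?mulr0 // -enorm_sq b0 expr0n.
have ha : 0 < enorm u by rewrite lt_def apos enorm_ge0.
have hb : 0 < enorm v by rewrite lt_def bpos enorm_ge0.
have h := sqnorm_ge0 (enorm v *: u - enorm u *: v).
rewrite sqnormD sqnormZ -scaleNr sqnormZ dotvZl dotvC dotvZl dotvC in h.
rewrite -!enorm_sq in h.
set a := enorm u in h ha *; set b := enorm v in h hb *; set d := dotv u v in h *.
have hab : 0 < a * b by rewrite mulr_gt0.
have : 0 <= (a * b) * (2 * (a * b - d)).
  by move: h; congr (_ <= _); rewrite sqrrN; ring.
by rewrite pmulr_rge0 // pmulr_rge0 // subr_ge0.
Qed.

Lemma enormD u v : enorm (u + v) <= enorm u + enorm v.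
Proof.
rewrite -(ler_pXn2r (n:=2)) ?nnegrE ?addr_ge0 ?enorm_ge0 //.
rewrite enorm_sq sqnormD sqrrD !enorm_sq lerD2r lerD2l -mulr_natl.
have := dotv_CS u v; set d := dotv u v; set x := enorm u * enorm v; rewrite mulr1 -mulr_natl; lra.
Qed.

Lemma enormZ (a : R) u : enorm (a *: u) = `|a| * enorm u.
Proof. by rewrite /enorm sqnormZ sqrtrM ?sqr_ge0 // sqrtr_sqr. Qed.

Lemma enormN u : enorm (- u) = enorm u.
Proof. by rewrite -scaleN1r enormZ normrN normr1 mul1r. Qed.

Lemma enormB u v : enorm (u - v) = enorm (v - u).
Proof. by rewrite -enormN opprB. Qed.

Lemma enorm_sum (I : finType) (P : pred I) (f : I -> vec) :
  enorm (\sum_(i | P i) f i) <= \sum_(i | P i) enorm (f i).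
Proof.
apply: (big_ind2 (fun x y => enorm x <= y)).
- by rewrite /enorm /sqnorm /dotv big1 ?sqrtr0 // => j _; rewrite mxE mul0r.
- by move=> x1 x2 y1 y2 h1 h2; apply: le_trans (enormD _ _) (lerD h1 h2).
- by [].
Qed.

End Vec.

Lemma le_sum_sub (R : realType) (I : finType) (A : pred I) (F : I -> R) :
  (forall i, 0 <= F i) -> \sum_(i in A) F i <= \sum_i F i.
Proof.
move=> h; rewrite big_mkcond /=; apply: ler_sum => i _.
by case: (i \in A) => //; apply: h.
Qed.

Lemma le_sum_one (R : realType) (I : finType) (F : I -> R) (i : I) :
  (forall j, 0 <= F j) -> F i <= \sum_j F j.
Proof.
move=> h; rewrite (bigD1 i) //= lerDl; exact: sumr_ge0.
Qed.

Lemma enorm0 (R : realType) (M : nat) : enorm (0 : 'rV[R]_M) = 0.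
Proof. by rewrite /enorm /sqnorm /dotv big1 ?sqrtr0 // => j _; rewrite mxE mul0r. Qed.

Lemma sq3 (R : realFieldType) (a b c : R) : (a + b + c) ^+ 2 <= 3 * (a ^+ 2 + b ^+ 2 + c ^+ 2).
Proof.
have h1 := sqr_ge0 (a - b); have h2 := sqr_ge0 (b - c); have h3 := sqr_ge0 (a - c).
nra.
Qed.
Lemma fin_ineq (R : realFieldType) (al d2 z m r2 x2 sg : R) : 0 <= al -> 0 <= d2 -> 0 <= z -> 0 <= m -> m <= 1 -> 0 <= r2 -> 0 <= x2 -> 0 <= sg ->
   m ^+ 2 * al * (d2 * r2 + d2 * x2 + z * sg) <= al * (d2 + z) * m * r2 + al * (d2 + z) * m * x2 + al * (d2 + z) * m ^+ 2 * sg.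
Proof.
move=> ha hd hz hm0 hm1 hr hx hs.
have e : al * (d2 + z) * m * r2 + al * (d2 + z) * m * x2 + al * (d2 + z) * m ^+ 2 * sg - m ^+ 2 * al * (d2 * r2 + d2 * x2 + z * sg)
  = al * m * (r2 + x2) * (d2 * (1 - m) + z) + al * d2 * m ^+ 2 * sg by ring.
rewrite -subr_ge0 e; apply: addr_ge0; repeat (rewrite subr_ge0 || apply: mulr_ge0 || apply: addr_ge0 || apply: exprn_ge0) => //.
Qed.
Unset Implicit Arguments.
Section Main.
Variables (R : realType) (K : nat) (N E B : 'I_K -> nat)
  (p : 'I_K -> R) (pd : forall k : 'I_K, 'I_(N k) -> R) (delta : R) (M : nat)
  (Q : forall k : 'I_K, 'I_(N k) -> 'rV[R]_M -> R) (wko : 'I_K -> 'rV[R]_M)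
  (mu : R).
Hypotheses (hp : forall k, 0 < p k) (hpd : forall k n, 0 < pd k n)
  (hE : forall k, (0 < E k)%N) (hB : forall k, (0 < B k <= N k)%N)
  (hdelta : 0 < delta) (hmu0 : 0 <= mu) (hmu1 : mu <= 1)
  (hlip : forall k n x y,
        enorm (grad (Q k n) x - grad (Q k n) y) <= delta * enorm (x - y)).

Ltac nneg0 := repeat (match goal with
 | |- is_true (0 <= _ * _) => apply: mulr_ge0
 | |- is_true (0 <= _ + _) => apply: addr_ge0
 | |- is_true (0 <= _ ^+ _) => apply: exprn_ge0
 | |- is_true (0 <= _ / _) => apply: divr_ge0
 | |- is_true (0 <= _^-1) => rewrite invr_ge0
 end); rewrite ?ler0n ?enorm_ge0 ?sqnorm_ge0 //.

Definition cc k := (K%:R * p k * (E k)%:R * (B k)%:R)^-1.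
Definition aa k (n : 'I_(N k)) := ((N k)%:R * pd k n)^-1.
Definition AA k := \sum_(n < N k) aa k n.
Definition al k := 1 + cc k * delta * AA k.
Definition gg k (n : 'I_(N k)) := enorm (grad (Q k n) (wko k)).
Definition GG k := \sum_(n < N k) aa k n * gg k n.
Definition XX (w : 'rV[R]_M) k := cc k * (delta * AA k * enorm (w - wko k) + GG k).
Definition Gam k := (E k)%:R * al k ^+ E k.


Lemma cc_gt0 k : 0 < cc k.
Proof.
have hk : (0 < K)%N by case: k => i hi; exact: leq_ltn_trans (leq0n i) hi.
have /andP[b0 _] := hB k.
by rewrite invr_gt0 !mulr_gt0 ?ltr0n ?hE ?hp.
Qed.

Lemma aa_gt0 k n : 0 < aa k n.
Proof.
have /andP[b0 bn] := hB k.
by rewrite invr_gt0 mulr_gt0 ?hpd // ltr0n (leq_trans b0 bn).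
Qed.

Lemma AA_ge0 k : 0 <= AA k.
Proof. by apply: sumr_ge0 => n _; apply/ltW/aa_gt0. Qed.

Lemma gg_ge0 k n : 0 <= gg k n.
Proof. exact: enorm_ge0. Qed.

Lemma GG_ge0 k : 0 <= GG k.
Proof. by apply: sumr_ge0 => n _; rewrite mulr_ge0 ?gg_ge0 // ltW ?aa_gt0. Qed.

Lemma XX_ge0 w k : 0 <= XX w k.
Proof.
apply: mulr_ge0; first exact/ltW/cc_gt0.
apply: addr_ge0; last exact: GG_ge0.
nneg0; [exact: ltW | exact: AA_ge0].
Qed.

Lemma al_ge1 k : 1 <= al k.
Proof. rewrite lerDl; nneg0; [exact/ltW/cc_gt0 | exact: ltW | exact: AA_ge0]. Qed.

Lemma grad_bound k n x : enorm (grad (Q k n) x) <= delta * enorm (x - wko k) + gg k n.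
Proof.
have -> : grad (Q k n) x = (grad (Q k n) x - grad (Q k n) (wko k)) + grad (Q k n) (wko k).
  by rewrite subrK.
exact: le_trans (enormD _ _) (lerD (hlip _ _ _ _) (lexx _)).
Qed.

Lemma local_bound k w (bs : {ffun 'I_(E k) -> {set 'I_(N k)}}) e :
  enorm (local_iter B Q p pd mu w bs e - w) <= mu * (e%:R * al k ^+ e) * XX w k.
Proof.
elim: e => [|e IH]; first by rewrite /= subrr enorm0 mul0r mulr0 mul0r.
rewrite /=.
set we := local_iter B Q p pd mu w bs e in IH *.
set Sg := \sum_(b in _) _.
have hS : enorm Sg <= delta * (enorm (we - w) + enorm (w - wko k)) * AA k + GG k.
  apply: le_trans (enorm_sum _ _) _.
  apply: (@le_trans _ _ (\sum_(b in batch_at bs e) (aa k b * (delta * (enorm (we - w) + enorm (w - wko k)) + gg k b)))).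
    apply: ler_sum => b _; rewrite enormZ ger0_norm; last exact/ltW/aa_gt0.
    rewrite ler_pM2l ?aa_gt0 //; apply: le_trans (grad_bound _ _ _) _.
    rewrite lerD2r ler_pM2l //.
    have -> : we - wko k = (we - w) + (w - wko k) by rewrite addrA subrK.
    exact: enormD.
  apply: le_trans (le_sum_sub _ _) _.
    by move=> b; nneg0; [exact/ltW/aa_gt0 | exact: ltW].
  rewrite /AA /GG mulr_sumr -big_split /=; apply: ler_sum => b _.
  by rewrite mulrDr mulrC.
have -> : we - mu / (K%:R * p k * (E k)%:R * (B k)%:R) *: Sg - w =
          (we - w) - (mu * cc k) *: Sg by rewrite /cc addrAC.
apply: le_trans (enormD _ _) _; rewrite enormN enormZ ger0_norm; last first.
  by nneg0; exact/ltW/cc_gt0.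
have hc := cc_gt0 k; have hA := AA_ge0 k; have hG := GG_ge0 k.
have hX := XX_ge0 w k; have hal := al_ge1 k.
have hbe : 1 <= al k ^+ e by rewrite exprn_ege1.
move: IH hS; rewrite /XX /al exprS.
set d := enorm (we - w); set r := enorm (w - wko k); set A := AA k; set G := GG k.
set c := cc k; set be := al k ^+ e in hbe *; set S := enorm Sg.
rewrite /al -/A -/c => IH hS.
have hd : 0 <= d := enorm_ge0 _. have hr : 0 <= r := enorm_ge0 _.
have hS0 : 0 <= S := enorm_ge0 _.
have ht : 0 <= c * delta * A by nneg0; exact: ltW.
set t := c * delta * A in ht *.
have hX0 : 0 <= c * (delta * A * r + G) by nneg0; exact: ltW.
set X := c * (delta * A * r + G) in hX0 IH *.
have h1 : mu * c * S <= mu * t * d + mu * X.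
  have : c * S <= c * (delta * (d + r) * A + G) by rewrite ler_pM2l.
  move=> h; have := ler_wpM2l hmu0 h; rewrite /t /X; move=> h'.
  apply: (@le_trans _ _ (mu * (c * (delta * (d + r) * A + G)))); first by rewrite -mulrA.
  by rewrite le_eqVlt; apply/orP; left; apply/eqP; ring.
have hbe0 : 0 <= be by apply: le_trans ler01 hbe.
have h2a : mu * (t * d) <= t * d.
  by rewrite -[X in _ <= X]mul1r; apply: ler_wpM2r => //; nneg0.
have h2b : t * d <= t * (mu * (e%:R * be) * X) by apply: ler_wpM2l.
have h3 : mu * X * 1 <= mu * X * be by apply: ler_wpM2l => //; nneg0.
have h4 : 0 <= mu * (e%:R * be) * X by nneg0.
rewrite -addn1 natrD.
have -> : mu * ((e%:R + 1) * ((1 + t) * be)) * X =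
  mu * (e%:R * be) * X + t * (mu * (e%:R * be) * X) + mu * be * X + t * (mu * be * X)
  by rewrite /t; ring.
have h5 : 0 <= t * (mu * be * X) by nneg0.
clearbody t X d S be; lra.
Qed.


Lemma Gam_ge0 k : 0 <= Gam k.
Proof. rewrite /Gam; nneg0; exact: le_trans ler01 (al_ge1 k). Qed.

Lemma agent_bound l w (bs : {ffun 'I_(E l) -> {set 'I_(N l)}}) :
  enorm (\sum_(e < E l) \sum_(b in bs e)
     aa l b *: (grad (Q l b) (local_iter B Q p pd mu w bs e) - grad (Q l b) w))
  <= (E l)%:R * (AA l * (delta * (mu * Gam l * XX w l))).
Proof.
apply: le_trans (enorm_sum _ _) _.
set D := AA l * (delta * (mu * Gam l * XX w l)).
apply: (@le_trans _ _ (\sum_(e < E l) D)); last first.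
  by rewrite sumr_const card_ord mulr_natl.
apply: ler_sum => e _.
apply: le_trans (enorm_sum _ _) _.
have hd : enorm (local_iter B Q p pd mu w bs e - w) <= mu * Gam l * XX w l.
  apply: le_trans (local_bound _ _ _ _) _.
  apply: ler_wpM2r; first exact: XX_ge0.
  apply: ler_wpM2l => //; rewrite /Gam.
  have h1 := al_ge1 l.
  apply: ler_pM.
  - by rewrite ler0n.
  - by apply: exprn_ge0; apply: le_trans ler01 h1.
  - by rewrite ler_nat ltnW.
  - by apply: ler_weXn2l => //; rewrite ltnW.
apply: (@le_trans _ _ (\sum_(b in bs e) aa l b * (delta * (mu * Gam l * XX w l)))).
  apply: ler_sum => b _; rewrite enormZ ger0_norm; last exact/ltW/aa_gt0.
  apply: ler_wpM2l; first exact/ltW/aa_gt0.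
  apply: le_trans (hlip _ _ _ _) _.
  by apply: ler_wpM2l => //; apply: ltW.
apply: le_trans (le_sum_sub _ _) _.
  move=> b; nneg0; [exact/ltW/aa_gt0 | exact: ltW | exact: Gam_ge0 | exact: XX_ge0].
by rewrite /D /AA mulr_suml.
Qed.

Lemma q_bound (L : nat) w S (bb : {dffun forall k : 'I_K, {ffun 'I_(E k) -> {set 'I_(N k)}}}) :
  enorm (incr_noise L B Q p pd mu w S bb)
  <= L%:R^-1 * \sum_l cc l * ((E l)%:R * (AA l * (delta * (mu * Gam l * XX w l)))).
Proof.
rewrite /incr_noise enormZ ger0_norm; last by rewrite invr_ge0 ler0n.
apply: ler_wpM2l; first by rewrite invr_ge0 ler0n.
apply: le_trans (enorm_sum _ _) _.
apply: le_trans (le_sum_sub _ _) _; last first.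
  apply: ler_sum => l _.
  rewrite enormZ ger0_norm; last exact/ltW/cc_gt0.
  apply: ler_wpM2l; first exact/ltW/cc_gt0.
  exact: agent_bound.
move=> l; nneg0; first [exact/ltW/cc_gt0 | exact: AA_ge0 | exact: ltW | exact: Gam_ge0 | exact: XX_ge0].
Qed.

Definition Lam (L : nat) :=
  L%:R^-1 * \sum_l cc l * ((E l)%:R * (AA l * (delta * (Gam l * (cc l * AA l))))).
Definition Zc : R := \sum_k (B k)%:R * (N k)%:R ^+ 2.
Definition Cst (L : nat) := 3 * Lam L ^+ 2 * (delta ^+ 2 + Zc * K%:R).
Definition TT := \sum_k \sum_(n < N k) gg k n ^+ 2.

Lemma Lam_ge0 L : 0 <= Lam L.
Proof.
rewrite /Lam; apply: mulr_ge0; first by rewrite invr_ge0 ler0n.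
apply: sumr_ge0 => l _; nneg0;
  first [exact/ltW/cc_gt0 | exact: AA_ge0 | exact: ltW | exact: Gam_ge0].
Qed.

Lemma pd_le1 (hpd1 : forall k, \sum_(n < N k) pd k n = 1) k n : pd k n <= 1.
Proof. rewrite -(hpd1 k); apply: le_sum_one => j; exact/ltW/hpd. Qed.

Lemma gg_le_sqrt k n : gg k n <= Num.sqrt TT.
Proof.
rewrite -[gg k n]ger0_norm ?gg_ge0 // -sqrtr_sqr ler_sqrt; last first.
  by apply: sumr_ge0 => i _; apply: sumr_ge0 => j _; apply: sqr_ge0.
apply: (@le_trans _ _ (\sum_(n < N k) gg k n ^+ 2)).
  by apply: (@le_sum_one R _ (fun n => gg k n ^+ 2) n) => j; apply: sqr_ge0.
apply: (@le_sum_one R _ (fun k => \sum_(n < N k) gg k n ^+ 2) k).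
by move=> i; apply: sumr_ge0 => j _; apply: sqr_ge0.
Qed.

Lemma XX_bound (wo w : 'rV[R]_M) (xi : R) (hxi : forall k, enorm (wko k - wo) <= xi) l :
  XX w l <= cc l * AA l * (delta * (enorm (wo - w) + xi) + Num.sqrt TT).
Proof.
rewrite /XX -[cc l * AA l * _]mulrA; apply: ler_wpM2l; first exact/ltW/cc_gt0.
have h1 : enorm (w - wko l) <= enorm (wo - w) + xi.
  have -> : w - wko l = (w - wo) + (wo - wko l) by rewrite addrA subrK.
  apply: le_trans (enormD _ _) _; rewrite enormB; apply: lerD => //.
  by rewrite enormB.
have h2 : GG l <= AA l * Num.sqrt TT.
  rewrite /GG /AA mulr_suml; apply: ler_sum => n _.
  apply: ler_wpM2l; [exact/ltW/aa_gt0 | exact: gg_le_sqrt].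
have h3 : delta * AA l * enorm (w - wko l) <= delta * AA l * (enorm (wo - w) + xi).
  apply: ler_wpM2l => //; nneg0; [exact: ltW | exact: AA_ge0].
have -> : AA l * (delta * (enorm (wo - w) + xi) + Num.sqrt TT) =
   delta * AA l * (enorm (wo - w) + xi) + AA l * Num.sqrt TT by ring.
exact: lerD.
Qed.

Lemma q_bound2 (L : nat) (wo w : 'rV[R]_M) (xi : R)
  (hxi : forall k, enorm (wko k - wo) <= xi) S
  (bb : {dffun forall k : 'I_K, {ffun 'I_(E k) -> {set 'I_(N k)}}}) :
  enorm (incr_noise L B Q p pd mu w S bb)
  <= mu * Lam L * (delta * (enorm (wo - w) + xi) + Num.sqrt TT).
Proof.
apply: le_trans (q_bound _ _ _ _) _.
set V := delta * (enorm (wo - w) + xi) + Num.sqrt TT.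
have -> : mu * Lam L * V = L%:R^-1 *
   \sum_l cc l * ((E l)%:R * (AA l * (delta * (mu * Gam l * (cc l * AA l * V))))).
  transitivity (L%:R^-1 * \sum_l (mu * V) *
     (cc l * ((E l)%:R * (AA l * (delta * (Gam l * (cc l * AA l))))))).
    by rewrite -mulr_sumr /Lam; ring.
  by congr (_ * _); apply: eq_bigr => l _; ring.
apply: ler_wpM2l; first by rewrite invr_ge0 ler0n.
apply: ler_sum => l _.
have hc : 0 <= cc l * ((E l)%:R * (AA l * (delta * (mu * Gam l)))).
  nneg0; first [exact/ltW/cc_gt0 | exact: AA_ge0 | exact: ltW | exact: Gam_ge0].
have := ler_wpM2l hc (XX_bound wo w xi hxi l).
set c0 := cc l * _.
have e1 : forall X, cc l * ((E l)%:R * (AA l * (delta * (mu * Gam l * X)))) = c0 * X.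
  by move=> X; rewrite /c0; ring.
by rewrite !e1.
Qed.


Lemma TT_bound (hpd1 : forall k, \sum_(n < N k) pd k n = 1) :
  TT <= Zc * \sum_k sigma_q2 B Q pd wko k.
Proof.
rewrite /TT mulr_sumr; apply: ler_sum => k _.
set P := \sum_(n < N k) (pd k n)^-1 * sqnorm (grad (Q k n) (wko k)).
have hP : \sum_(n < N k) gg k n ^+ 2 <= P.
  apply: ler_sum => n _; rewrite /gg enorm_sq.
  rewrite -[X in X <= _]mul1r; apply: ler_wpM2r; first exact: sqnorm_ge0.
  by rewrite (invf_gte1 _).1 ?hpd ?pd_le1.
have hP0 : 0 <= P.
  by apply: sumr_ge0 => n _; apply: mulr_ge0; [rewrite invr_ge0; exact/ltW/hpd | exact: sqnorm_ge0].
have hZ : (B k)%:R * (N k)%:R ^+ 2 <= Zc.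
  by apply: (@le_sum_one R _ (fun k => (B k)%:R * (N k)%:R ^+ 2) k) => j; nneg0.
have /andP[b0 bn] := hB k.
have hBN : 0 < (B k)%:R * (N k)%:R ^+ 2 :> R.
  by rewrite mulr_gt0 ?exprn_gt0 ?ltr0n // (leq_trans b0 bn).
have hs : sigma_q2 B Q pd wko k = 3 / ((B k)%:R * (N k)%:R ^+ 2) * P by [].
have hs0 : 0 <= sigma_q2 B Q pd wko k.
  by rewrite hs; apply: mulr_ge0 => //; apply: divr_ge0 => //; apply: ltW.
have e : (B k)%:R * (N k)%:R ^+ 2 * sigma_q2 B Q pd wko k = 3 * P.
  by rewrite hs mulrA mulrCA mulfV ?mulr1 // gt_eqF.
apply: le_trans hP _.
apply: (@le_trans _ _ ((B k)%:R * (N k)%:R ^+ 2 * sigma_q2 B Q pd wko k)).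
  by rewrite e; lra.
by apply: ler_wpM2r.
Qed.

Lemma sigma_ge0 k : 0 <= sigma_q2 B Q pd wko k.
Proof.
have /andP[b0 bn] := hB k.
rewrite /sigma_q2; apply: mulr_ge0.
  by apply: divr_ge0 => //; nneg0.
by apply: sumr_ge0 => n _; apply: mulr_ge0; [rewrite invr_ge0; exact/ltW/hpd | exact: sqnorm_ge0].
Qed.

Lemma pointwise (hpd1 : forall k, \sum_(n < N k) pd k n = 1) (hK : (0 < K)%N)
  (L : nat) (wo : 'rV[R]_M) (xi : R) (hxi : forall k, enorm (wko k - wo) <= xi)
  (w : 'rV[R]_M) S
  (bb : {dffun forall k : 'I_K, {ffun 'I_(E k) -> {set 'I_(N k)}}}) :
  sqnorm (incr_noise L B Q p pd mu w S bb) <=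
  Cst L * mu * sqnorm (wo - w) + Cst L * mu * xi ^+ 2
  + Cst L * mu ^+ 2 * (K%:R^-1 * \sum_k sigma_q2 B Q pd wko k).
Proof.
have hq := q_bound2 L wo w xi hxi S bb.
rewrite -enorm_sq -(enorm_sq (wo - w)).
have hT := TT_bound hpd1.
have hT0 : 0 <= TT by apply: sumr_ge0 => i _; apply: sumr_ge0 => j _; apply: sqr_ge0.
have hsT : Num.sqrt TT ^+ 2 = TT by rewrite sqr_sqrtr.
have hq0 := enorm_ge0 (incr_noise L B Q p pd mu w S bb).
have hL := Lam_ge0 L.
have hZ0 : 0 <= Zc by apply: sumr_ge0 => k _; nneg0.
have hx0 : 0 <= xi.
  by have := hxi (Ordinal hK); apply: le_trans; apply: enorm_ge0.
set q := enorm (incr_noise L B Q p pd mu w S bb) in hq hq0 *.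
set r := enorm (wo - w) in hq *.
have hr0 : 0 <= r by apply: enorm_ge0.
set s := Num.sqrt TT in hq hsT *.
set Sg := \sum_k sigma_q2 B Q pd wko k in hT *.
have hSg : Sg = K%:R * (K%:R^-1 * Sg).
  by rewrite mulrA mulfV ?mul1r // pnatr_eq0 -lt0n.
have hav : 0 <= K%:R^-1 * Sg.
  by apply: mulr_ge0; [rewrite invr_ge0 ler0n | apply: sumr_ge0 => k _; apply: sigma_ge0].
set av := K%:R^-1 * Sg in hSg hav *.
have h1 : q ^+ 2 <= (mu * Lam L * (delta * (r + xi) + s)) ^+ 2.
  by rewrite !expr2; apply: ler_pM.
have h2 := sq3 (delta * r) (delta * xi) s.
have h3 : (mu * Lam L * (delta * (r + xi) + s)) ^+ 2 <=
    mu ^+ 2 * (3 * Lam L ^+ 2) * (delta ^+ 2 * r ^+ 2 + delta ^+ 2 * xi ^+ 2 + s ^+ 2).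
  have -> : (mu * Lam L * (delta * (r + xi) + s)) ^+ 2 =
      (mu ^+ 2 * Lam L ^+ 2) * (delta * r + delta * xi + s) ^+ 2 by ring.
  have -> : mu ^+ 2 * (3 * Lam L ^+ 2) * (delta ^+ 2 * r ^+ 2 + delta ^+ 2 * xi ^+ 2 + s ^+ 2)
      = (mu ^+ 2 * Lam L ^+ 2) * (3 * ((delta * r) ^+ 2 + (delta * xi) ^+ 2 + s ^+ 2)) by ring.
  by apply: ler_wpM2l => //; nneg0.
have h4 : mu ^+ 2 * (3 * Lam L ^+ 2) * (delta ^+ 2 * r ^+ 2 + delta ^+ 2 * xi ^+ 2 + s ^+ 2) <=
    mu ^+ 2 * (3 * Lam L ^+ 2) * (delta ^+ 2 * r ^+ 2 + delta ^+ 2 * xi ^+ 2 + (Zc * K%:R) * av).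
  apply: ler_wpM2l; first by nneg0.
  rewrite lerD2l hsT; apply: le_trans hT _; rewrite hSg; lra.
have h5 := @fin_ineq R (3 * Lam L ^+ 2) (delta ^+ 2) (Zc * K%:R) mu (r ^+ 2) (xi ^+ 2) av.
rewrite /Cst.
apply: le_trans h1 _; apply: le_trans h3 _; apply: le_trans h4 _.
apply: le_trans (h5 _ _ _ _ _ _ _ _) _; try by nneg0.
all: try by apply: sqr_ge0.
all: try by [].
all: by rewrite le_eqVlt; apply/orP; left; apply/eqP; ring.
Qed.
End Main.

Lemma iter_expect_le (R : realType) (K : nat) (N E : 'I_K -> nat)
  (piA : {set 'I_K} -> R) (piB : forall k : 'I_K, {set 'I_(N k)} -> R)
  (F : {set 'I_K} ->
       {dffun forall k : 'I_K, {ffun 'I_(E k) -> {set 'I_(N k)}}} -> R) (U : R) :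
  (forall S, 0 <= piA S) -> \sum_S piA S = 1 ->
  (forall k T, 0 <= piB k T) -> (forall k, \sum_T piB k T = 1) ->
  (forall S bb, F S bb <= U) ->
  iter_expect (E := E) piA piB F <= U.
Proof.
move=> hA0 hA1 hB0 hB1 hF.
have hW : \sum_(bb : {dffun forall k : 'I_K, {ffun 'I_(E k) -> {set 'I_(N k)}}})
            \prod_(k < K) \prod_(e < E k) piB k (bb k e) = 1.
  rewrite (@sum_dffun_prod R _ (fun k => {ffun 'I_(E k) -> {set 'I_(N k)}} : finType)
             (fun k h => \prod_(e < E k) piB k (h e))).
  apply: big1 => k _.
  transitivity (\prod_(e < E k) \sum_(T : {set 'I_(N k)}) piB k T); last first.
    by apply: big1 => e _; apply: hB1.
  by rewrite bigA_distr_bigA.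
rewrite /iter_expect.
apply: (@le_trans _ _ (\sum_S \sum_(bb : {dffun forall k : 'I_K, {ffun 'I_(E k) -> {set 'I_(N k)}}})
    piA S * (\prod_(k < K) \prod_(e < E k) piB k (bb k e)) * U)).
  apply: ler_sum => S _; apply: ler_sum => bb _; apply: ler_wpM2l => //.
  apply: mulr_ge0 => //; apply: prodr_ge0 => k _; apply: prodr_ge0 => e _; exact: hB0.
rewrite (eq_bigr (fun S => piA S * U * \sum_(bb : {dffun forall k : 'I_K, {ffun 'I_(E k) -> {set 'I_(N k)}}})
            \prod_(k < K) \prod_(e < E k) piB k (bb k e))); last first.
  by move=> S _; rewrite mulr_sumr; apply: eq_bigr => bb _; ring.
rewrite hW; under eq_bigr do rewrite mulr1.
by rewrite -mulr_suml hA1 mul1r.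
Qed.

Unset Implicit Arguments.
Set Strict Implicit.

Theorem lemma5 (R : realType)
  (K L : nat) (N E B : 'I_K -> nat)
  (p : 'I_K -> R) (pd : forall k : 'I_K, 'I_(N k) -> R)
  (nu delta : R) :
  (0 < L <= K)%N ->
  (forall k, 0 < E k)%N ->
  (forall k, 0 < B k <= N k)%N ->
  (forall k, 0 < p k) -> \sum_(k < K) p k = 1 ->
  (forall k n, 0 < pd k n) -> (forall k, \sum_(n < N k) pd k n = 1) ->
  0 < nu -> 0 < delta ->
  exists (C mu0 : R), 0 < mu0 /\
  forall (M : nat)
    (Q : forall k : 'I_K, 'I_(N k) -> 'rV[R]_M -> R)
    (wo : 'rV[R]_M) (wko : 'I_K -> 'rV[R]_M) (xi : R)
    (piA : {set 'I_K} -> R) (piB : forall k : 'I_K, {set 'I_(N k)} -> R)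
    (Omega : finType) (piW : Omega -> R) (wprev : Omega -> 'rV[R]_M)
    (mu : R),
    (* Assumption A *)
    (forall k n w, differentiable (Q k n) w) ->
    (forall k n, convex_fun (Q k n)) ->
    (forall k n x y,
        enorm (grad (Q k n) x - grad (Q k n) y) <= delta * enorm (x - y)) ->
    (forall k, strongly_convex nu (emp_risk Q k)) ->
    (* minimizers *)
    (forall w, agg_risk Q wo <= agg_risk Q w) ->
    (forall k w, emp_risk Q k (wko k) <= emp_risk Q k w) ->
    (* Assumption B *)
    (forall k, enorm (wko k - wo) <= xi) ->
    (* sampling without replacement with the prescribed inclusion probabilities *)
    sampling_design L p piA ->
    (forall k, sampling_design (B k) (pd k) (piB k)) ->
    (* distribution of the previous iterate w_{i-1} *)
    (forall o, 0 <= piW o) -> \sum_(o : Omega) piW o = 1 ->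
    0 < mu <= mu0 ->
    \sum_(o : Omega) piW o *
       iter_expect (E := E) piA piB
         (fun S bb => sqnorm (incr_noise L B Q p pd mu (wprev o) S bb))
    <= C * mu * (\sum_(o : Omega) piW o * sqnorm (wo - wprev o))
       + C * mu * xi ^+ 2
       + C * mu ^+ 2 * (K%:R^-1 * \sum_(k < K) sigma_q2 B Q pd wko k).
Proof.
move=> /andP[hL0 hLK] hE hB hp hp1 hpd hpd1 hnu hdelta.
have hK : (0 < K)%N by apply: leq_trans hL0 hLK.
exists (Cst R K N E B p pd delta L), 1; split; first exact: ltr01.
move=> M Q wo wko xi piA piB Omega piW wprev mu _ _ hlip _ _ _ hxi hA hBs hW0 hW1
  /andP[hmu0 hmu1].
have hmu0' : 0 <= mu by apply: ltW.
case: hA => hA0 hA1 _ _.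
set C := Cst R K N E B p pd delta L.
set av := K%:R^-1 * \sum_(k < K) sigma_q2 B Q pd wko k.
apply: (@le_trans _ _ (\sum_o piW o * (C * mu * sqnorm (wo - wprev o) + C * mu * xi ^+ 2 + C * mu ^+ 2 * av))).
  apply: ler_sum => o _; apply: ler_wpM2l => //.
  apply: iter_expect_le => //.
  - by move=> k T; case: (hBs k) => h0 _ _ _; apply: h0.
  - by move=> k; case: (hBs k) => _ h1 _ _; apply: h1.
  - move=> S bb.
    exact: (pointwise R K N E B p pd delta M Q wko mu hp hpd hE hB hdelta hmu0' hmu1 hlip hpd1 hK L wo xi hxi (wprev o) S bb).
have -> : \sum_o piW o * (C * mu * sqnorm (wo - wprev o) + C * mu * xi ^+ 2 + C * mu ^+ 2 * av)
   = C * mu * (\sum_o piW o * sqnorm (wo - wprev o)) + (C * mu * xi ^+ 2 + C * mu ^+ 2 * av) * \sum_o piW o.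
  rewrite !mulr_sumr -big_split; apply: eq_bigr => o _ /=; ring.
by rewrite hW1 mulr1 addrA.
Qed.
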